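(* Let $m$ be a positive integer, $q=3^m$, $n=q-1$, and let $e$ be an integer with $1<e<q-1$, $e\notin C_1$ and $\ell_e=|C_e|=m$. Then the ternary cyclic code $\mathcal{C}_{(1,e)}$ has parameters $[3^m-1,\,3^m-1-2m,\,4]$ if and only if all of the following hold: (C1) $e$ is even; (C2) the equation $(x+1)^e+x^e+1=0$ has the only solution $x=1$ in $\mathrm{GF}(q)^*$; (C3) the equation $(x+1)^e-x^e-1=0$ has the only solution $x=0$ in $\mathrm{GF}(q)$.
   Context: For $j\in\mathbb{Z}_n$, $C_j=\{j,3j,3^2j,\dots,3^{\ell_j-1}j\}$ (mod $n$) is the $3$-cyclotomic coset modulo $n=3^m-1$ containing $j$, with $\ell_j$ the smallest positive integer such that $3^{\ell_j}j\equiv j\pmod n$. Let $\alpha$ be a generator of $\mathrm{GF}(q)^*$ and $m_a(x)$ the minimal polynomial of $a\in\mathrm{GF}(q)$ over $\mathrm{GF}(3)$. For $1<e<q-1$ with $e\notin C_1$, $\mathcal{C}_{(1,e)}$ denotes the cyclic code of length $n$ over $\mathrm{GF}(3)$ with generator polynomial $m_{\alpha}(x)m_{\alpha^e}(x)$. A code with parameters $[n,k,d]$ has length $n$, dimension $k$ and minimum Hamming distance $d$. *)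

(* Defs.v *)
From HB Require Import structures.
From mathcomp Require Import all_boot all_order all_algebra all_field.
Set Implicit Arguments. Unset Strict Implicit. Unset Printing Implicit Defensive.
Import GRing.Theory.
Local Open Scope ring_scope.

(* 3-cyclotomic coset of j modulo n: { j * 3^i mod n : i >= 0 }.
   Since 3 is invertible mod n = 3^m - 1 with order m <= n, ranging i over
   0 .. n-1 covers all of it. *)
Definition cyc_coset3 (n j : nat) : seq nat :=
  undup [seq (j * 3 ^ i) %% n | i <- iota 0 n]%N.

(* canonical embedding of GF(3) into a field F (a ring morphism when char F = 3) *)
Definition emb3 (F : finFieldType) (c : 'F_3) : F := (nat_of_ord c)%:R.

Definition is_minpoly3 (F : finFieldType) (a : F) (p : {poly 'F_3}) : Prop :=
  [/\ p \is monic, root (map_poly (@emb3 F) p) a &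
      forall r : {poly 'F_3}, r != 0 -> root (map_poly (@emb3 F) r) a ->
        (size p <= size r)%N].

Definition word_poly (n : nat) (c : 'rV['F_3]_n) : {poly 'F_3} :=
  \sum_(i < n) (c 0 i)%:P * 'X^i.

Definition cyclic_code (n : nat) (g : {poly 'F_3}) : {set 'rV['F_3]_n} :=
  [set c : 'rV['F_3]_n | g %| word_poly c].

Definition hamming_dist (n : nat) (c1 c2 : 'rV['F_3]_n) : nat :=
  #|[pred i : 'I_n | c1 0 i != c2 0 i]|.

Definition has_params (n : nat) (C : {set 'rV['F_3]_n}) (k d : nat) : Prop :=
  [/\ #|C| = (3 ^ k)%N,
      (exists c1, exists c2, [/\ c1 \in C, c2 \in C, c1 != c2 & hamming_dist c1 c2 = d]) &
      (forall c1 c2, c1 \in C -> c2 \in C -> c1 != c2 -> (d <= hamming_dist c1 c2)%N)].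

(* Main.v *)
Require Import Defs.
From HB Require Import structures.
From mathcomp Require Import all_boot all_order all_algebra all_field.
From mathcomp Require Import zify ring lra.
Import GRing.Theory.
Local Open Scope ring_scope.
Set Implicit Arguments. Unset Strict Implicit.

Lemma natr_mod3 (F : finFieldType) (H3 : 3%:R = 0 :> F) (k : nat) :
  (k %% 3)%:R = k%:R :> F.
Proof. by rewrite {2}(divn_eq k 3) natrD natrM H3 mulr0 add0r. Qed.

Lemma F3val (x : 'F_3) : ((x : nat) < 3)%N.
Proof. by case: x. Qed.

Definition emb3' (F : finFieldType) (H3 : 3%:R = 0 :> F) : 'F_3 -> F := @emb3 F.

Lemma emb3_nmod (F : finFieldType) (H3 : 3%:R = 0 :> F) : nmod_morphism (emb3' H3).
Proof.
split=> [|x y]; first by [].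
rewrite /emb3' /emb3 -natrD -(natr_mod3 H3 (x + y)); congr (_ %:R).

Qed.

Lemma emb3_mon (F : finFieldType) (H3 : 3%:R = 0 :> F) : monoid_morphism (emb3' H3).
Proof.
split=> [|x y]; first by [].
rewrite /emb3' /emb3 -natrM -(natr_mod3 H3 (x * y)); congr (_ %:R).

Qed.

HB.instance Definition _ F H3 := GRing.isNmodMorphism.Build _ _ (@emb3' F H3) (emb3_nmod H3).
HB.instance Definition _ F H3 := GRing.isMonoidMorphism.Build _ _ (@emb3' F H3) (emb3_mon H3).


Definition sgnF (F : finFieldType) (H3 : 3%:R = 0 :> F) (a : 'F_3) : (emb3' H3 a) ^+ 3 = emb3' H3 a.
Proof. by rewrite -rmorphXn; congr (emb3' H3 _); case: a => [[|[|[|k]]] Ha]; apply: val_inj. Qed.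


Lemma pigeon (T T' : finType) (g : T -> T') : (#|T'| < #|T|)%N ->
  exists x y, x != y /\ g x = g y.
Proof.
move=> lt.
case: (boolP [exists x, exists y, (x != y) && (g x == g y)]).
  by case/existsP=> x /existsP [y /andP [xy /eqP gxy]]; exists x, y.
move/existsPn=> H; exfalso.
have inj : injective g.
  move=> x y gxy; apply/eqP/negPn/negP => xy.
  by move: (H x) => /existsPn /(_ y); rewrite xy gxy eqxx.
by move: (leq_card _ inj); rewrite leqNgt lt.
Qed.

Section WordPoly.
Variable k : nat.
Implicit Types c : 'rV['F_3]_k.

Lemma coef_wp c (i : 'I_k) : (word_poly c)`_i = c 0 i.
Proof.
rewrite /word_poly coef_sum (bigD1 i) //= coefCM coefXn eqxx mulr1 big1 ?addr0 //.
move=> j ji; rewrite coefCM coefXn.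
have H : (nat_of_ord i == nat_of_ord j) = false by apply/negbTE; rewrite val_eqE eq_sym.
by rewrite H mulr0.
Qed.

Lemma size_wp c : (size (word_poly c) <= k)%N.
Proof.
apply/leq_sizeP => j hj; rewrite /word_poly coef_sum big1 // => i _.
rewrite coefCM coefXn.
have H : (j == nat_of_ord i) = false by apply/negbTE; rewrite neq_ltn (leq_trans (ltn_ord i) hj) orbT.
by rewrite H mulr0.
Qed.

Lemma wpB c1 c2 : word_poly (c1 - c2) = word_poly c1 - word_poly c2.
Proof.
rewrite /word_poly -sumrB; apply: eq_bigr => i _.
by rewrite !mxE polyCB mulrBl.
Qed.

Lemma wpD c1 c2 : word_poly (c1 + c2) = word_poly c1 + word_poly c2.
Proof.
rewrite /word_poly -big_split; apply: eq_bigr => i _.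
by rewrite !mxE polyCD mulrDl.
Qed.

Lemma wp0 : word_poly (0 : 'rV['F_3]_k) = 0.
Proof. by rewrite /word_poly big1 // => i _; rewrite mxE mul0r. Qed.

Lemma wp_eq0 c : word_poly c = 0 -> c = 0.
Proof. by move=> H; apply/rowP => i; rewrite mxE -coef_wp H coef0. Qed.

Lemma wp_row (P : {poly 'F_3}) : (size P <= k)%N -> word_poly (\row_(i < k) P`_i) = P.
Proof.
move=> sP; apply/polyP => j.
case: (ltnP j k) => jk.
  by rewrite (coef_wp _ (Ordinal jk)) mxE.
have := size_wp (\row_(i < k) P`_i) => /leq_sizeP /(_ j jk) ->.
by move/leq_sizeP: sP => /(_ j jk) ->.
Qed.

End WordPoly.

Section Main.
Variables (m : nat) (F : finFieldType) (alpha : F) (e : nat) (p1 pe : {poly 'F_3}).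
Hypotheses (m0 : (0 < m)%N) (cardF : #|F| = (3 ^ m)%N)
  (prim : (3 ^ m - 1)%N.-primitive_root alpha)
  (e1 : (1 < e)%N) (en : (e < 3 ^ m - 1)%N)
  (eC1 : e \notin cyc_coset3 (3 ^ m - 1) 1)
  (sCe : size (cyc_coset3 (3 ^ m - 1) e) = m)
  (mp1 : is_minpoly3 alpha p1) (mpe : is_minpoly3 (alpha ^+ e) pe).

Local Notation n := (3 ^ m - 1)%N.

Lemma pchar3 : (3 \in [pchar F])%N.
Proof. exact: (card_finPcharP cardF). Qed.

Lemma H3 : 3%:R = 0 :> F.
Proof. exact: pcharf0 pchar3. Qed.

Local Notation f := (emb3' H3).
Local Notation ev r x := ((map_poly f r).[x]).

Lemma ev_frob (r : {poly 'F_3}) (x : F) : ev r (x ^+ 3) = (ev r x) ^+ 3.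
Proof.
have H : (map_poly (pFrobenius_aut pchar3) (map_poly f r)).[x ^+ 3] = (ev r x) ^+ 3 :=
  horner_map _ _ _.
rewrite -H; congr (_.[_]).
rewrite -map_poly_comp; apply: eq_map_poly => a /=.
by rewrite pFrobenius_autE sgnF.
Qed.

Lemma ev_frobX (r : {poly 'F_3}) (x : F) i : ev r (x ^+ (3 ^ i)) = (ev r x) ^+ (3 ^ i).
Proof.
elim: i => [|i IH]; first by rewrite !expr1.
by rewrite expnSr !exprM ev_frob IH.
Qed.


Lemma ev_wp k (c : 'rV['F_3]_k) x : ev (word_poly c) x = \sum_(i < k) f (c 0 i) * x ^+ i.
Proof.
rewrite /word_poly rmorph_sum horner_sum; apply: eq_bigr => i _.
by rewrite rmorphM /= map_polyC map_polyXn hornerCM hornerXn.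
Qed.

Lemma mp_root (a : F) p : is_minpoly3 a p -> root (map_poly f p) a.
Proof. by case. Qed.

Lemma mp_dvd (a : F) (p r : {poly 'F_3}) : is_minpoly3 a p -> root (map_poly f r) a -> p %| r.
Proof.
case=> pm ra0 pmin rr.
have ra : root (map_poly f p) a := ra0.
have p0 := monic_neq0 pm.
apply/modp_eq0P; apply/eqP; apply/negPn/negP => nz.
have Hr : r %% p = r - (r %/ p) * p by rewrite {2}(divp_eq r p) addrAC subrr add0r.
have : root (map_poly f (r %% p)) a.
  rewrite /root Hr rmorphB rmorphM /= hornerD hornerN hornerM.
  by rewrite (rootP ra) (rootP rr) mulr0 subr0.
move/(pmin _ nz); rewrite leqNgt ltn_modp p0 //.
Qed.

Lemma mp_size_le (a : F) p : is_minpoly3 a p -> (size p <= m.+1)%N.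
Proof.
move=> mp; case: (mp) => pm ra pmin.
have [v [w [vw hvw]]] : exists v w : 'rV['F_3]_(m.+1), v != w /\
    ev (word_poly v) a = ev (word_poly w) a.
  apply: pigeon; rewrite card_mx card_Fp // mul1n cardF.
  by rewrite ltn_exp2l.
have nz : word_poly (v - w) != 0.
  by apply/negP => /eqP /wp_eq0 /eqP; rewrite subr_eq0 (negbTE vw).
have rt : root (map_poly f (word_poly (v - w))) a.
  by rewrite /root wpB rmorphB /= hornerD hornerN hvw subrr eqxx.
by apply: (leq_trans (pmin _ nz rt)); apply: size_wp.
Qed.

Lemma mp_size_ge (a : F) p (rs : seq F) : is_minpoly3 a p -> uniq rs ->
  all (root (map_poly f p)) rs -> (size rs < size p)%N.
Proof.
case=> pm _ _ urs ars.
rewrite -(size_map_poly f p); apply: max_poly_roots => //.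
by rewrite map_poly_eq0 monic_neq0.
Qed.

Lemma root_conj (a : F) p i : is_minpoly3 a p -> root (map_poly f p) (a ^+ (3 ^ i)).
Proof.
move/mp_root => ra; rewrite /root ev_frobX (rootP ra) expr0n.
by rewrite expn_eq0.
Qed.


Lemma n_gt0 : (0 < n)%N.
Proof.
rewrite subn_gt0; have := ltn_expl m (isT : (1 < 3)%N).
by case: m m0 => // k _; rewrite expnS; lia.
Qed.

Lemma m_lt_n : (m <= n)%N.
Proof. have := ltn_expl m (isT : (1 < 3)%N); lia. Qed.

Lemma alpha_n : alpha ^+ n = 1.
Proof. exact: prim_expr_order prim. Qed.

Lemma alpha_inj i j : (i < n)%N -> (j < n)%N -> alpha ^+ i = alpha ^+ j -> i = j.
Proof.
move=> hi hj /eqP; rewrite (eq_prim_root_expr prim) !modn_small //.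
by move/eqP.
Qed.

Lemma alpha0 : alpha != 0.
Proof.
apply/eqP => a0; move: alpha_n; rewrite a0 expr0n (negbTE (lt0n_neq0 n_gt0)) /=.
by move/eqP; rewrite eq_sym oner_eq0.
Qed.

Lemma alpha_neq0 i : alpha ^+ i != 0.
Proof. by rewrite expf_neq0 // alpha0. Qed.

Lemma pow3_lt i : (i < m)%N -> (3 ^ i < n)%N.
Proof.
move=> im; have : (3 ^ i.+1 <= 3 ^ m)%N by rewrite leq_exp2l.
rewrite expnS; have := expn_gt0 3 i; lia.
Qed.

Lemma pow3_mod t : (3 ^ t %% n = 3 ^ (t %% m) %% n)%N.
Proof.
rewrite {1}(divn_eq t m) expnD (mulnC (t %/ m)%N) expnM.
have h3 : (3 ^ m = 1 %[mod n])%N.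
  set N := (3 ^ m - 1)%N.
  have -> : (3 ^ m = 1 + N)%N by rewrite /N; have := expn_gt0 3 m; lia.
  by rewrite modnDr.
by rewrite -modnMml -modnXm h3 modnXm exp1n modnMml mul1n.
Qed.

Definition rs1 : seq F := [seq alpha ^+ (3 ^ i) | i <- iota 0 m].
Definition rsE : seq F := [seq alpha ^+ k | k <- cyc_coset3 n e].

Lemma uniq_rs1 : uniq rs1.
Proof.
rewrite map_inj_in_uniq ?iota_uniq // => i j; rewrite !mem_iota !add0n => /andP [_ hi] /andP [_ hj].
move/(alpha_inj (pow3_lt hi) (pow3_lt hj)); exact: expnI.
Qed.

Lemma size_rs1 : size rs1 = m.
Proof. by rewrite size_map size_iota. Qed.

Lemma coset_lt k : k \in cyc_coset3 n e -> (k < n)%N.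
Proof. by rewrite mem_undup => /mapP [i _ ->]; rewrite ltn_pmod // n_gt0. Qed.

Lemma uniq_rsE : uniq rsE.
Proof.
rewrite map_inj_in_uniq ?undup_uniq // => i j hi hj.
exact: (alpha_inj (coset_lt hi) (coset_lt hj)).
Qed.

Lemma size_rsE : size rsE = m.
Proof. by rewrite size_map sCe. Qed.

Lemma rsE_conj x : x \in rsE -> exists i, x = (alpha ^+ e) ^+ (3 ^ i).
Proof.
case/mapP => k; rewrite mem_undup => /mapP [i _ ->] ->.
by exists i; rewrite (expr_mod _ alpha_n) -exprM.
Qed.

Lemma roots_rsE (p : {poly 'F_3}) : root (map_poly f p) (alpha ^+ e) ->
  all (root (map_poly f p)) rsE.
Proof.
move=> r; apply/allP => x /rsE_conj [i ->].
by rewrite /root ev_frobX (rootP r) expr0n expn_eq0.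
Qed.

Lemma roots_rs1 (p : {poly 'F_3}) : root (map_poly f p) alpha ->
  all (root (map_poly f p)) rs1.
Proof.
move=> r; apply/allP => x /mapP [i _ ->].
by rewrite /root ev_frobX (rootP r) expr0n expn_eq0.
Qed.

Lemma size_p1 : size p1 = m.+1.
Proof.
apply/eqP; rewrite eqn_leq (mp_size_le mp1) /=.
by rewrite -size_rs1 (mp_size_ge mp1 uniq_rs1) // roots_rs1 // mp_root.
Qed.

Lemma size_pe : size pe = m.+1.
Proof.
apply/eqP; rewrite eqn_leq (mp_size_le mpe) /=.
by rewrite -size_rsE (mp_size_ge mpe uniq_rsE) // roots_rsE // mp_root.
Qed.

Lemma coset_cross i j : (3 ^ i = e * 3 ^ j %% n)%N -> False.
Proof.
move=> H; apply: (negP eC1).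
have jm : (j <= j * m)%N by rewrite leq_pmulr.
have He : e = (3 ^ ((i + (j * m - j)) %% m) %% n)%N.
  rewrite -pow3_mod expnD H modnMml -mulnA -expnD subnKC //.
  rewrite -modnMmr pow3_mod modnMl expn0 modnMmr muln1 modn_small //.
rewrite He mem_undup; apply/mapP; exists ((i + (j * m - j)) %% m)%N; last by rewrite mul1n.
by rewrite mem_iota add0n (leq_trans (ltn_pmod _ m0) m_lt_n).
Qed.

Lemma p1_beta : ~~ root (map_poly f p1) (alpha ^+ e).
Proof.
apply/negP => rb.
have u : uniq (rs1 ++ rsE).
  rewrite cat_uniq uniq_rs1 uniq_rsE andbT /=; apply/hasPn => x /rsE_conj [j ->].
  apply/negP => /mapP [i]; rewrite mem_iota add0n => /andP [_ hi].
  rewrite -exprM -(expr_mod _ alpha_n) => /(alpha_inj (ltn_pmod _ n_gt0) (pow3_lt hi)) h.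
  exact: (coset_cross (esym h)).
have := mp_size_ge mp1 u; rewrite all_cat roots_rs1 ?mp_root // roots_rsE //.
by rewrite size_cat size_rs1 size_rsE size_p1 => /(_ isT); lia.
Qed.


Local Notation C := (cyclic_code n (p1 * pe)).
Local Notation beta := (alpha ^+ e).

Lemma memC c : (c \in C) =
  (ev (word_poly c) alpha == 0) && (ev (word_poly c) beta == 0).
Proof.
rewrite inE; apply/idP/andP.
  case/dvdpP => q ->; rewrite !rmorphM /= !hornerM.
  by rewrite (rootP (mp_root mp1)) (rootP (mp_root mpe)) !(mulr0, mul0r).
case=> r1 r2.
have /dvdpP [s Hs] := mp_dvd mp1 r1.
have rs : root (map_poly f s) beta.
  move: r2; rewrite Hs rmorphM /= hornerM mulf_eq0 => /orP [//|].
  by move=> h; move: p1_beta; rewrite /root h.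
have /dvdpP [t Ht] := mp_dvd mpe rs.
by apply/dvdpP; exists t; rewrite Hs Ht -mulrA (mulrC pe).
Qed.

Lemma C_sub c1 c2 : c1 \in C -> c2 \in C -> c1 - c2 \in C.
Proof. by rewrite !inE wpB; apply: dvdp_sub. Qed.

Lemma C0 : 0 \in C.
Proof. by rewrite inE wp0 dvdp0. Qed.

Lemma twom_le_n : (2 * m <= n)%N.
Proof.
have : forall k, (2 * k + 1 <= 3 ^ k)%N.
  by elim=> // k IH; rewrite expnS; lia.
by move/(_ m); lia.
Qed.

Lemma size_g : size (p1 * pe) = (2 * m)%N.+1.
Proof.
rewrite size_mul ?size_p1 ?size_pe //; first by rewrite /=; lia.
all: by rewrite -size_poly_eq0 ?size_p1 ?size_pe.
Qed.

Lemma g_neq0 : p1 * pe != 0.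
Proof. by rewrite -size_poly_eq0 size_g. Qed.

Lemma card_C : #|C| = (3 ^ (n - 2 * m))%N.
Proof.
set k := (n - 2 * m)%N; set g := p1 * pe.
pose phi (h : 'rV['F_3]_k) : 'rV['F_3]_n := \row_(i < n) (g * word_poly h)`_i.
have sz (h : 'rV['F_3]_k) : (size (g * word_poly h)%R <= n)%N.
  apply: (leq_trans (size_mul_leq _ _)); rewrite size_g.
  have := size_wp h; have := twom_le_n; rewrite /k; lia.
have wphi (h : 'rV['F_3]_k) : word_poly (phi h) = g * word_poly h by rewrite wp_row.
have inj : injective phi.
  move=> h1 h2 /(congr1 (@word_poly n)); rewrite !wphi => /(mulfI g_neq0) H.
  by apply/eqP; rewrite -subr_eq0; apply/eqP/wp_eq0; rewrite wpB H subrr.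
have -> : C = phi @: setT.
  apply/setP => c; rewrite inE; apply/idP/imsetP.
    case/dvdpP => q Hq.
    have sq : (size q <= k)%N.
      have := size_wp c; rewrite Hq.
      have [->|q0] := eqVneq q 0; first by rewrite size_poly0.
      rewrite /g size_mul ?g_neq0 // size_g /k addnS /=; set s := size q; lia.
    exists (\row_(i < k) q`_i); first by rewrite inE.
    by apply/rowP => i; rewrite mxE wp_row // mulrC -Hq coef_wp.
  by case=> h _ ->; rewrite wphi dvdp_mulIl.
by rewrite card_imset // cardsT card_mx card_Fp // mul1n.
Qed.

Definition wt (c : 'rV['F_3]_n) := #|[set i | c 0 i != 0]|.

Lemma hd_wt c1 c2 : hamming_dist c1 c2 = wt (c1 - c2).
Proof. by apply: eq_card => i; rewrite !inE !mxE subr_eq0. Qed.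

Lemma wt_eq0 c : wt c = 0%N -> c = 0.
Proof.
move/eqP; rewrite cards_eq0 => /eqP H; apply/rowP => i; rewrite mxE.
apply/eqP/negPn/negP => h.
have : i \in [set i | c 0 i != 0] by rewrite inE.
by rewrite H inE.
Qed.


Lemma two_m1 : 2%:R = -1 :> F.
Proof. by apply/eqP; rewrite -subr_eq0 opprK -(natrD F 2 1) H3. Qed.

Lemma one_neq_m1 : (1 : F) != -1.
Proof.
apply/eqP => h; have : (2%:R : F) = 0 by rewrite mulr2n {2}h subrr.
by move/eqP; rewrite two_m1 oppr_eq0 oner_eq0.
Qed.

Lemma sq1 (s : F) : s ^+ 2 = 1 -> s = 1 \/ s = -1.
Proof.
move=> h; have : (s - 1) * (s + 1) = 0 by rewrite -subr_sqr h expr1n subrr.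
by move/eqP; rewrite mulf_eq0 subr_eq0 addr_eq0 => /orP [/eqP|/eqP]; [left|right].
Qed.

Lemma sq1_ne (s t : F) : s ^+ 2 = 1 -> t ^+ 2 = 1 -> s != t -> t = - s.
Proof.
move=> /sq1 [->|->] /sq1 [->|->]; rewrite ?eqxx ?opprK //.
Qed.

Lemma f_sq1 (a : 'F_3) : a != 0 -> f a ^+ 2 = 1.
Proof.
rewrite -rmorphXn => a0; rewrite -(rmorph1 f); congr (f _).
by move: a0; case: a => [[|[|[|k]]] Ha] //= _; apply: val_inj.
Qed.

Lemma f_neq0 (a : 'F_3) : a != 0 -> f a != 0.
Proof. by rewrite fmorph_eq0. Qed.

Section Even.
Hypothesis hC1 : ~~ odd e.

Lemma pow_e_sq1 (s : F) : s ^+ 2 = 1 -> s ^+ e = 1.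
Proof.
move=> h; rewrite -(odd_double_half e) (negbTE hC1) add0n -mul2n exprM h.
exact: expr1n.
Qed.

Lemma powN_e (x : F) : (- x) ^+ e = x ^+ e.
Proof. by rewrite exprNn (pow_e_sq1 (s:=-1)) ?mul1r // sqrrN expr1n. Qed.

Lemma key2 (x y a b : F) : x != 0 -> x != y -> a ^+ 2 = 1 -> b ^+ 2 = 1 ->
  a * x + b * y = 0 -> a * x ^+ e + b * y ^+ e = 0 -> False.
Proof.
move=> x0 xy a2 b2 l1 l2.
have hy : y = - (a * b) * x.
  have by_ : b * y = - (a * x) by apply/eqP; rewrite -addr_eq0 addrC l1.
  by rewrite -[y]mul1r -b2 expr2 -mulrA by_; ring.
have hye : y ^+ e = x ^+ e.
  by rewrite hy exprMn (pow_e_sq1 (s := - (a * b))) ?mul1r // sqrrN exprMn a2 b2 mul1r.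
have ab : a + b = 0.
  apply/eqP; move: l2; rewrite hye -mulrDl => /eqP; rewrite mulf_eq0 => /orP [//|].
  by rewrite expf_eq0 (negbTE x0) andbF.
have hb : b = - a by apply/eqP; rewrite -subr_eq0 opprK addrC ab.
move: xy; rewrite hy hb mulrN opprK -expr2 a2 mul1r eqxx //.
Qed.

Hypothesis hC2 : forall x : F, x != 0 -> (x + 1) ^+ e + x ^+ e + 1 = 0 -> x = 1.
Hypothesis hC3 : forall x : F, (x + 1) ^+ e - x ^+ e - 1 = 0 -> x = 0.

Lemma key3 (x y z a c : F) : x != 0 -> y != 0 -> x != y ->
  a ^+ 2 = 1 -> c ^+ 2 = 1 ->
  a * x + a * y + c * z = 0 -> a * x ^+ e + a * y ^+ e + c * z ^+ e = 0 -> False.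
Proof.
move=> x0 y0 xy a2 c2 l1 l2.
set s := a * c.
have s2 : s ^+ 2 = 1 by rewrite exprMn a2 c2 mul1r.
have aa : a * a = 1 by rewrite -expr2.
have l1' : x + y + s * z = 0.
  transitivity (a * (a * x + a * y + c * z)); last by rewrite l1 mulr0.
  by rewrite !mulrDr !mulrA aa !mul1r.
have l2' : x ^+ e + y ^+ e + s * z ^+ e = 0.
  transitivity (a * (a * x ^+ e + a * y ^+ e + c * z ^+ e)); last by rewrite l2 mulr0.
  by rewrite !mulrDr !mulrA aa !mul1r.
have sz : s * z = - (x + y) by apply/eqP; rewrite -subr_eq0 opprK addrC l1'.
have ze : z ^+ e = (x + y) ^+ e.
  by rewrite -(powN_e (x + y)) -sz exprMn (pow_e_sq1 (s:=s)) // mul1r.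
rewrite ze in l2'.
set t := x / y.
have hx : x = t * y by rewrite /t divfK.
have ye0 : y ^+ e != 0 by rewrite expf_neq0.
have ht : (t ^+ e + 1 + s * (t + 1) ^+ e) * y ^+ e = 0.
  rewrite -l2' hx (_ : t * y + y = (t + 1) * y); last by rewrite mulrDl mul1r.
  by rewrite !exprMn !mulrDl mul1r mulrA.
move/eqP: ht; rewrite mulf_eq0 (negbTE ye0) orbF => /eqP ht.
have t0 : t != 0 by apply/eqP => t0; move: x0; rewrite hx t0 mul0r eqxx.
clearbody t s.
case: (sq1 s2) => hs; rewrite hs in ht.
  have /hC2 : (t + 1) ^+ e + t ^+ e + 1 = 0.
    by rewrite -ht; ring.
  move=> /(_ t0) t1; move: xy; rewrite hx t1 mul1r eqxx //.
have /hC3 : (t + 1) ^+ e - t ^+ e - 1 = 0.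
  by rewrite -oppr0 -ht; ring.
by move/eqP; rewrite (negbTE t0).
Qed.

Lemma key3' (x y z a b c : F) : x != 0 -> y != 0 -> z != 0 ->
  x != y -> x != z -> y != z ->
  a ^+ 2 = 1 -> b ^+ 2 = 1 -> c ^+ 2 = 1 ->
  a * x + b * y + c * z = 0 -> a * x ^+ e + b * y ^+ e + c * z ^+ e = 0 -> False.
Proof.
move=> x0 y0 z0 xy xz yz a2 b2 c2 l1 l2.
have [ab|ab] := eqVneq a b.
  by subst b; apply: (key3 x0 y0 xy a2 c2 l1 l2).
have [ac|ac] := eqVneq a c.
  subst c; apply: (key3 x0 z0 xz a2 b2).
    by rewrite -l1 addrAC.
  by rewrite -l2 addrAC.
have hb := sq1_ne a2 b2 ab; have hc := sq1_ne a2 c2 ac.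
have bc : b = c by rewrite hb hc.
rewrite -bc in l1 l2; apply: (key3 (z:=x) y0 z0 yz b2 a2).
  by rewrite addrC addrA l1.
by rewrite addrC addrA l2.
Qed.


Lemma S_supp (c : 'rV['F_3]_n) x :
  ev (word_poly c) x = \sum_(i in [set i | c 0 i != 0]) f (c 0 i) * x ^+ i.
Proof.
rewrite ev_wp (bigID (fun i => i \in [set i | c 0 i != 0])) /=.
rewrite [X in _ + X]big1 ?addr0 // => i; rewrite inE negbK => /eqP ->.
by rewrite rmorph0 mul0r.
Qed.

Lemma alpha_ne (i j : 'I_n) : i != j -> alpha ^+ i != alpha ^+ j.
Proof.
move=> ij; apply/eqP => /(alpha_inj (ltn_ord i) (ltn_ord j)) h.
by move: ij; rewrite -val_eqE /= h eqxx.
Qed.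

Lemma ae (i : nat) : (alpha ^+ e) ^+ i = (alpha ^+ i) ^+ e.
Proof. by rewrite -!exprM mulnC. Qed.

Lemma low_wt c : c \in C -> c != 0 -> (4 <= wt c)%N.
Proof.
rewrite memC => /andP [/eqP s1 /eqP s2] c0.
rewrite !S_supp in s1 s2.
rewrite /wt; set A := [set i | c 0 i != 0] in s1 s2 *.
have inA i : i \in A -> c 0 i != 0 by rewrite inE.
rewrite leqNgt; apply/negP => lt4.
case hA: #|A| lt4 => [|[|[|[|k]]]] // _.
- by move: c0; rewrite (wt_eq0 hA) eqxx.
- move/eqP: hA => /cards1P [i Ai].
  have ci : c 0 i != 0 by apply: inA; rewrite Ai set11.
  move: s1; rewrite Ai big_set1 => /eqP; rewrite mulf_eq0 (negbTE (f_neq0 ci)).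
  by rewrite (negbTE (alpha_neq0 _)).
- move/eqP: hA => /cards2P [i [j [ij Aij]]].
  have ci : c 0 i != 0 by apply: inA; rewrite Aij !inE eqxx.
  have cj : c 0 j != 0 by apply: inA; rewrite Aij !inE eqxx orbT.
  have nj : i \notin [set j] by rewrite inE.
  rewrite Aij big_setU1 // big_set1 in s1.
  rewrite Aij big_setU1 // big_set1 !ae in s2.
  exact: (key2 (alpha_neq0 i) (alpha_ne ij) (f_sq1 ci) (f_sq1 cj) s1 s2).
- have : (0 < #|A|)%N by rewrite hA.
  case/card_gt0P => i Ai.
  have : #|A :\ i| == 2%N by move: hA; rewrite (cardsD1 i) Ai add1n => [[->]].
  case/cards2P => j [k [jk Ajk]].
  have jA : j \in A :\ i by rewrite Ajk !inE eqxx.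
  have kA : k \in A :\ i by rewrite Ajk !inE eqxx orbT.
  move: (jA) (kA); rewrite !inE => /andP [ji cj] /andP [ki ck].
  have ci := inA i Ai.
  have defA : A = i |: [set j; k] by rewrite -Ajk setD1K.
  have ni : i \notin [set j; k] by rewrite !inE negb_or eq_sym ji eq_sym ki.
  have nj : j \notin [set k] by rewrite inE.
  rewrite defA big_setU1 // big_setU1 // big_set1 /= addrA in s1.
  rewrite defA big_setU1 // big_setU1 // big_set1 /= addrA !ae in s2.
  apply: (key3' (alpha_neq0 i) (alpha_neq0 j) (alpha_neq0 k) _ _ (alpha_ne jk)
     (f_sq1 ci) (f_sq1 cj) (f_sq1 ck) s1 s2).
    by apply: alpha_ne; rewrite eq_sym.
  by apply: alpha_ne; rewrite eq_sym.
Qed.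

End Even.


Definition wordN (ps : seq (nat * 'F_3)) : 'rV['F_3]_n :=
  \row_(l < n) \sum_(pa <- ps) (if (l : nat) == pa.1 then pa.2 else 0).

Lemma ev_wordN ps x : all (fun pa => (pa.1 < n)%N) ps ->
  ev (word_poly (wordN ps)) x = \sum_(pa <- ps) f pa.2 * x ^+ pa.1.
Proof.
elim: ps => [|pa ps IH] /=.
  rewrite ev_wp big_nil big1 // => i _; rewrite mxE big_nil rmorph0 mul0r //.
case/andP => hp hall.
have -> : wordN (pa :: ps) = wordN [:: pa] + wordN ps.
  by apply/rowP => l; rewrite !mxE big_cons big_seq1.
rewrite wpD rmorphD hornerD IH // big_cons; congr (_ + _).
rewrite ev_wp (bigD1 (Ordinal hp)) //= big1 ?addr0.
  by rewrite mxE big_seq1 eqxx.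
move=> l hl; rewrite mxE big_seq1.
have -> : (nat_of_ord l == pa.1) = false.
  apply/negbTE; apply: contra hl => /eqP h; apply/eqP/val_inj => /=.
  exact: h.
by rewrite rmorph0 mul0r.
Qed.

Lemma wt_le (c : 'rV['F_3]_n) (s : seq nat) : (forall l : 'I_n, c 0 l != 0 -> nat_of_ord l \in s) ->
  (wt c <= size s)%N.
Proof.
move=> H; rewrite /wt cardE -(size_map val).
apply: uniq_leq_size; first by rewrite map_inj_uniq ?enum_uniq //; apply: val_inj.
move=> x /mapP [l]; rewrite mem_enum inE => /H hl ->; exact: hl.
Qed.

Lemma supp_wordN ps (l : 'I_n) : wordN ps 0 l != 0 -> nat_of_ord l \in map fst ps.
Proof.
apply: contraR => nl; rewrite mxE big1_seq // => pa /andP [_ hpa].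
have -> : (nat_of_ord l == pa.1) = false.
  by apply/negbTE; apply: contra nl => /eqP ->; apply: map_f.
by [].
Qed.

Lemma pow_of (x : F) : x != 0 -> exists i : 'I_n, x = alpha ^+ i.
Proof.
move=> x0; have xn : x ^+ n = 1.
  have e3 : (3 ^ m = n.+1)%N by have := expn_gt0 3 m; lia.
  have h : x ^+ n.+1 = x by rewrite -e3 -cardF expf_card.
  move: h; rewrite exprS => /eqP.
  rewrite -[X in _ == X]mulr1 (inj_eq (mulfI x0)).
  by move/eqP.
by have [i ->] := prim_rootP prim xn; exists i.
Qed.


Lemma one3 : (1 + 1 + 1 : F) = 0.
Proof. by rewrite -H3 !mulrS mulr0n addr0 addrA. Qed.

Lemma one2 : (1 + 1 : F) = -1.
Proof. by rewrite -mulr2n two_m1. Qed.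

Lemma n_ge3 : (3 <= n)%N.
Proof. by apply: leq_trans en. Qed.

Lemma n_even : n = (n./2 * 2)%N.
Proof.
have nodd : ~~ odd n by rewrite oddB ?expn_gt0 // oddX orbT.
by rewrite muln2 -{1}(odd_double_half n) (negbTE nodd).
Qed.

Local Notation h := (n./2).

Lemma h_ge2 : (2 <= h)%N.
Proof. have := n_even; have := n_ge3; lia. Qed.

Definition sgn3 (b : bool) : 'F_3 := if b then 1 else -1.

Lemma sgn3_neq0 b : sgn3 b != 0.
Proof. by case: b. Qed.

Definition blk (off : nat) (o : option ('I_h * bool)) : seq (nat * 'F_3) :=
  if o is Some (i, b) then [:: ((off + i)%N, sgn3 b)] else [::].

Definition psD (d : option (option ('I_h * bool) * option ('I_h * bool))) :=
  if d is Some (o1, o2) then blk 0 o1 ++ blk h o2 else [:: (0%N, 1); (1%N, 1)].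

Definition Ent (ps : seq (nat * 'F_3)) (l : nat) : 'F_3 :=
  \sum_(pa <- ps) (if l == pa.1 then pa.2 else 0).

Definition Eb (off : nat) (o : option ('I_h * bool)) (l : nat) : 'F_3 :=
  if o is Some (i, b) then (if l == (off + i)%N then sgn3 b else 0) else 0.

Lemma Ent_blk off o l : Ent (blk off o) l = Eb off o l.
Proof. by case: o => [[i b]|]; rewrite /Ent /= ?big_seq1 ?big_nil. Qed.

Lemma Ent_cat s1 s2 l : Ent (s1 ++ s2) l = Ent s1 l + Ent s2 l.
Proof. by rewrite /Ent big_cat. Qed.

Lemma Eb_small off o l : (l < off)%N -> Eb off o l = 0.
Proof.
case: o => [[i b]|] //= hl.
by have -> : (l == (off + i)%N) = false by apply/negbTE; rewrite neq_ltn (leq_trans hl (leq_addr _ _)).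
Qed.

Lemma Eb_big off o l : (off + h <= l)%N -> Eb off o l = 0.
Proof.
case: o => [[i b]|] //= hl.
have hi := ltn_ord i.
by have -> : (l == (off + i)%N) = false by apply/negbTE; rewrite neq_ltn; apply/orP; right; lia.
Qed.

Lemma blk_inj off o o' : (forall j, (j < h)%N -> Eb off o (off + j) = Eb off o' (off + j)) -> o = o'.
Proof.
case: o => [[i b]|]; case: o' => [[i' b']|] H //.
- have := H i (ltn_ord i); rewrite /= eqxx eqn_add2l.
  have [ii'|ii'] := eqVneq (nat_of_ord i) (nat_of_ord i').
    have -> : i = i' by apply: val_inj.
    by case: b b' {H} => [] [] // /eqP.
  by move/eqP; rewrite (negbTE (sgn3_neq0 b)).
- by have := H i (ltn_ord i); rewrite /= eqxx => /eqP; rewrite (negbTE (sgn3_neq0 b)).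
- by have := H i' (ltn_ord i'); rewrite /= eqxx => /eqP; rewrite eq_sym (negbTE (sgn3_neq0 b')).
Qed.

Lemma psD_inj d1 d2 : (forall l, Ent (psD d1) l = Ent (psD d2) l) -> d1 = d2.
Proof.
have hE o1 o2 l : Ent (psD (Some (o1, o2))) l = Eb 0 o1 l + Eb h o2 l.
  by rewrite /= Ent_cat !Ent_blk.
have none o1 o2 : ~ (forall l, Ent (psD None) l = Ent (psD (Some (o1, o2))) l).
  move=> H; have H0 := H 0%N; have H1 := H 1%N; clear H.
  move: H0 H1 => /=; rewrite !hE !(Eb_small o2) ?h_ge2 ?(leq_trans _ h_ge2) //.
  rewrite /Ent !big_cons !big_nil /= !addr0.
  case: o1 => [[i b]|] //=; rewrite !add0n add0r.
  case: (eqVneq 0%N (nat_of_ord i)) => [<-|i0].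
    by move=> _ /eqP; rewrite oner_eq0.
  by move=> /eqP; rewrite oner_eq0.
case: d1 d2 => [[o1 o2]|] [[o1' o2']|] // E.
- congr (Some (_, _)).
    apply: (blk_inj (off := 0)) => j hj; have := E j; rewrite !hE !add0n.
    by rewrite !(Eb_small o2) // !(Eb_small o2') // !addr0.
  apply: (blk_inj (off := h)) => j hj; have := E (h + j)%N; rewrite !hE.
  by rewrite !(Eb_big o1) ?add0n ?leq_addr // !(Eb_big o1') ?add0n ?leq_addr // !add0r.
- by case: (none o1 o2) => l; rewrite E.
- by case: (none o1' o2').
Qed.

Lemma all_psD d : all (fun pa => (pa.1 < n)%N) (psD d).
Proof.
have hn := n_even; have h2 := h_ge2.
case: d => [[o1 o2]|]; last by rewrite /= andbT; lia.
rewrite all_cat; apply/andP; split.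
  by case: o1 => [[i b]|] //=; rewrite andbT; have := ltn_ord i; lia.
by case: o2 => [[i b]|] //=; rewrite andbT; have := ltn_ord i; lia.
Qed.

Lemma size_psD d : (size (psD d) <= 2)%N.
Proof. by case: d => [[[[? ?]|] [[? ?]|]]|]. Qed.

Lemma Ent_out ps l : all (fun pa => (pa.1 < n)%N) ps -> (n <= l)%N -> Ent ps l = 0.
Proof.
move=> /allP hall hl; rewrite /Ent big1_seq // => pa /andP [_ hpa].
have hp : (pa.1 < n)%N := hall pa hpa.
have H : (l == pa.1) = false by apply/negbTE; rewrite neq_ltn; apply/orP; right; lia.
by rewrite H.
Qed.

Lemma exists_w4 : exists c, [/\ c \in C, c != 0 & (wt c <= 4)%N].
Proof.
pose W d := wordN (psD d).
pose sig d := (ev (word_poly (W d)) alpha, ev (word_poly (W d)) beta).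
have cF : #|F| = n.+1 by rewrite cardF; have := expn_gt0 3 m; lia.
have [d1 [d2 [d12 hs]]] : exists d1 d2, d1 != d2 /\ sig d1 = sig d2.
  apply: pigeon; rewrite card_prod cF !card_option card_prod !card_option card_prod.
  by rewrite card_ord card_bool -n_even.
case: hs => h1 h2.
exists (W d1 - W d2); split.
- by rewrite memC wpB !rmorphB /= !hornerD !hornerN h1 h2 !subrr eqxx.
- apply/negP; rewrite subr_eq0 => /eqP hW.
  apply/(negP d12)/eqP/psD_inj => l.
  case: (ltnP l n) => hl.
    by have := congr1 (fun w : 'rV['F_3]_n => w 0 (Ordinal hl)) hW; rewrite !mxE.
  by rewrite !Ent_out ?all_psD.
- have := size_psD d1; have := size_psD d2 => s2 s1.
  have hsup : forall l : 'I_n, (W d1 - W d2) 0 l != 0 ->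
      nat_of_ord l \in (map fst (psD d1) ++ map fst (psD d2)).
    move=> l; rewrite mxE mem_cat.
    case: (eqVneq (W d1 0 l) 0) => [->|nz1] nz.
      by apply/orP; right; apply: supp_wordN; move: nz; rewrite add0r mxE oppr_eq0.
    by apply/orP; left; apply: supp_wordN.
  apply: (leq_trans (wt_le hsup)); rewrite size_cat !size_map; lia.
Qed.

Section Forward.
Hypothesis hpar : forall c, c \in C -> c != 0 -> (4 <= wt c)%N.

Lemma no_w3 (i j k : nat) (a b c : 'F_3) : (i < n)%N -> (j < n)%N -> (k < n)%N ->
  i != j -> i != k -> a != 0 ->
  f a * alpha ^+ i + f b * alpha ^+ j + f c * alpha ^+ k = 0 ->
  f a * (alpha ^+ i) ^+ e + f b * (alpha ^+ j) ^+ e + f c * (alpha ^+ k) ^+ e = 0 ->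
  False.
Proof.
move=> hi hj hk ij ik a0 l1 l2.
set w := wordN [:: (i, a); (j, b); (k, c)].
have hall : all (fun pa => (pa.1 < n)%N) [:: (i, a); (j, b); (k, c)] by rewrite /= hi hj hk.
have wC : w \in C.
  rewrite memC !ev_wordN // !big_cons !big_nil /= !addr0 !addrA l1 eqxx /=.
  by rewrite !ae l2.
have w0 : w != 0.
  apply/negP => /eqP w0.
  have : w 0 (Ordinal hi) = a.
    by rewrite mxE !big_cons big_nil /= eqxx (negbTE ij) (negbTE ik) !addr0.
  by rewrite w0 mxE => /eqP; rewrite eq_sym (negbTE a0).
have := hpar wC w0.
have := @wt_le w [:: i; j; k] (fun l hl => @supp_wordN [:: (i, a); (j, b); (k, c)] l hl).
by move=> /= h1 h2; lia.
Qed.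

Lemma fC1 : ~~ odd e.
Proof.
apply/negP => oe.
have nodd : ~~ odd n.
  by rewrite oddB ?expn_gt0 // oddX orbT.
set h := n./2.
have hn : n = (h * 2)%N by rewrite muln2 -{1}(odd_double_half n) (negbTE nodd).
have n3 := n_ge3.
have h0 : (0 < h)%N by rewrite /h; lia.
have hlt : (h < n)%N by rewrite /h; lia.
have ah : alpha ^+ h = -1.
  have a2 : (alpha ^+ h) ^+ 2 = 1 by rewrite -exprM -hn alpha_n.
  case: (sq1 a2) => // a1.
  have := alpha_inj hlt n_gt0; rewrite expr0 a1 => /(_ erefl) h00.
  by move: h0; rewrite h00.
apply: (@no_w3 0 h h 1 1 0) => //; rewrite ?rmorph1 ?rmorph0 ?mul1r ?mul0r ?addr0.
- exact: n_gt0.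
- by rewrite eq_sym -lt0n.
- by rewrite eq_sym -lt0n.
- by rewrite expr0 ah subrr.
- by rewrite expr0 expr1n ah -signr_odd oe expr1 subrr.
Qed.

Lemma fC2 (x : F) : x != 0 -> ((x + 1) ^+ e + x ^+ e + 1 = 0 <-> x = 1).
Proof.
have ev := fC1.
have e0 : e != 0%N by case: (e) e1.
move=> x0; split; last first.
  by move=> ->; rewrite one2 powN_e // !expr1n one3.
move=> eq; apply/eqP/negPn/negP => x1.
have xm1 : x + 1 != 0.
  apply/negP => /eqP h.
  move: eq; rewrite h expr0n (negbTE e0) (_ : x = -1); last by apply/eqP; rewrite -addr_eq0 h.
  by rewrite powN_e // expr1n add0r one2 => /eqP; rewrite oppr_eq0 oner_eq0.
have y0 : - (x + 1) != 0 by rewrite oppr_eq0.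
have [i hx] := pow_of x0.
have [k hy] := pow_of y0.
apply: (@no_w3 i 0 k 1 1 1) => //; rewrite ?rmorph1 ?mul1r.
- exact: n_gt0.
- by apply/negP => /eqP i0; move: x1; rewrite hx i0 expr0 eqxx.
- apply/negP => /eqP ik; have : x = - (x + 1) by rewrite {1}hx ik -hy.
  move=> h; move: x1; rewrite -subr_eq0.
  have -> : x - 1 = - (x - - (x + 1)) + (1 + 1 + 1) * x by ring.
  by rewrite -h subrr oppr0 one3 mul0r addr0 eqxx.
- by rewrite -hx -hy expr0; ring.
- by rewrite -hx -hy expr0 expr1n powN_e // -eq; ring.
Qed.

Lemma fC3 (x : F) : (x + 1) ^+ e - x ^+ e - 1 = 0 <-> x = 0.
Proof.
have ev := fC1.
have e0 : e != 0%N by case: (e) e1.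
split; last first.
  by move=> ->; rewrite add0r expr1n expr0n (negbTE e0) subr0 subrr.
move=> eq; apply/eqP/negPn/negP => x0.
have xm1 : x + 1 != 0.
  apply/negP => /eqP h.
  move: eq; rewrite h expr0n (negbTE e0) (_ : x = -1); last by apply/eqP; rewrite -addr_eq0 h.
  rewrite powN_e // expr1n sub0r -opprD one2 opprK => /eqP; rewrite oner_eq0 //.
have x1 : x != 1.
  apply/negP => /eqP h; move: eq; rewrite h one2 powN_e // expr1n subrr sub0r.
  by move/eqP; rewrite oppr_eq0 oner_eq0.
have [i hx] := pow_of x0.
have [k hy] := pow_of xm1.
apply: (@no_w3 i 0 k 1 1 (-1)) => //; rewrite ?rmorph1 ?rmorphN1 ?mul1r ?mulN1r.
- exact: n_gt0.
- by apply/negP => /eqP i0; move: x1; rewrite hx i0 expr0 eqxx.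
- apply/negP => /eqP ik; have : x = x + 1 by rewrite {1}hx ik -hy.
  by move/eqP; rewrite -subr_eq0 opprD addrA subrr add0r oppr_eq0 oner_eq0.
- by rewrite -hx -hy expr0; ring.
- by rewrite -hx -hy expr0 expr1n -oppr0 -eq; ring.
Qed.

End Forward.

Lemma main : has_params C (n - 2 * m) 4 <->
  [/\ ~~ odd e,
      (forall x : F, x != 0 -> ((x + 1) ^+ e + x ^+ e + 1 = 0 <-> x = 1)) &
      (forall x : F, (x + 1) ^+ e - x ^+ e - 1 = 0 <-> x = 0)].
Proof.
split.
  case=> _ _ Hd.
  have hpar : forall c, c \in C -> c != 0 -> (4 <= wt c)%N.
    by move=> c cC c0; have := Hd c 0 cC C0 c0; rewrite hd_wt subr0.
  by split; [exact: fC1 hpar | exact: fC2 hpar | exact: fC3 hpar].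
case=> hC1 hC2 hC3.
have hC2' : forall x : F, x != 0 -> (x + 1) ^+ e + x ^+ e + 1 = 0 -> x = 1.
  by move=> x x0 /(hC2 x x0).
have hC3' : forall x : F, (x + 1) ^+ e - x ^+ e - 1 = 0 -> x = 0.
  by move=> x /hC3.
split.
- exact: card_C.
- have [c [cC c0 cw]] := exists_w4.
  exists c, 0; split => //; first exact: C0.
  rewrite hd_wt subr0; apply/eqP; rewrite eqn_leq cw /=.
  exact: (low_wt hC1 hC2' hC3' cC c0).
- move=> c1 c2 h1 h2 h12; rewrite hd_wt; apply: (low_wt hC1 hC2' hC3').
    exact: C_sub.
  by rewrite subr_eq0.
Qed.

End Main.

Theorem theorem1 (m : nat) (F : finFieldType) (alpha : F) (e : nat)
  (p1 pe : {poly 'F_3}) :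
  (0 < m)%N ->
  #|F| = (3 ^ m)%N ->
  (3 ^ m - 1)%N.-primitive_root alpha ->
  (1 < e)%N -> (e < 3 ^ m - 1)%N ->
  e \notin cyc_coset3 (3 ^ m - 1) 1 ->
  size (cyc_coset3 (3 ^ m - 1) e) = m ->
  is_minpoly3 alpha p1 ->
  is_minpoly3 (alpha ^+ e) pe ->
  has_params (cyclic_code (3 ^ m - 1) (p1 * pe)) (3 ^ m - 1 - 2 * m) 4
  <->
  [/\ ~~ odd e,
      (forall x : F, x != 0 -> ((x + 1) ^+ e + x ^+ e + 1 = 0 <-> x = 1)) &
      (forall x : F, (x + 1) ^+ e - x ^+ e - 1 = 0 <-> x = 0)].
Proof.
move=> m0 cardF prim e1 en eC1 sCe mp1 mpe.
exact: (main m0 cardF prim e1 en eC1 sCe mp1 mpe).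
Qed.
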